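(* Let $R$ be any ring and let $x,y\in R$ satisfy $x^2=0$, $y^2=0$, $x\neq 0$, $y\neq 0$. If $x+y$ is nilpotent, then $xy$ is nilpotent.
   Context: Rings are associative and not necessarily unital. *)

(* Defs.v *)
From mathcomp Require Import all_boot all_algebra.
Set Implicit Arguments. Unset Strict Implicit. Unset Printing Implicit Defensive.
Local Open Scope ring_scope.

(* Rings in the paper are associative but NOT necessarily unital.  MathComp's
   ring structures all carry a unit, so we model a (possibly non-unital)
   associative ring as an additive abelian group [V : zmodType] together with
   a multiplication [mul] that is associative and distributes over addition
   on both sides. *)
Definition rng_axioms (V : zmodType) (mul : V -> V -> V) : Prop :=
  [/\ forall a b c, mul a (mul b c) = mul (mul a b) c,
      forall a b c, mul a (b + c) = mul a b + mul a c
    & forall a b c, mul (a + b) c = mul a c + mul b c].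

(* Positive powers without a unit: [rpow mul a n] = a^(n+1). *)
Fixpoint rpow (V : Type) (mul : V -> V -> V) (a : V) (n : nat) : V :=
  if n is m.+1 then mul (rpow mul a m) a else a.

Definition rnilpotent (V : zmodType) (mul : V -> V -> V) (a : V) : Prop :=
  exists k : nat, rpow mul a k = 0.

(* Main.v *)
Require Import Defs.
From mathcomp Require Import all_boot all_algebra.
Local Open Scope ring_scope.
Import GRing.Theory.

Theorem lemma2p1 (V : zmodType) (mul : V -> V -> V) (hR : rng_axioms mul)
  (x y : V) (hx2 : mul x x = 0) (hy2 : mul y y = 0) (hx : x <> 0) (hy : y <> 0) :
  rnilpotent mul (x + y) -> rnilpotent mul (mul x y).
Proof.
case: hR => mA mDr mDl.
have m0r : forall z, mul z 0 = 0.
  move=> z; have H := mDr z 0 0; rewrite addr0 in H.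
  have := congr1 (fun t => t - mul z 0) H; by rewrite subrr addrK => /esym.
have m0l : forall z, mul 0 z = 0.
  move=> z; have H := mDl 0 0 z; rewrite addr0 in H.
  have := congr1 (fun t => t - mul 0 z) H; by rewrite subrr addrK => /esym.
set a := mul x y; set b := mul y x; set s := x + y.
have Ay : forall n, mul (rpow mul a n) y = 0.
  elim=> [|n IH] /=; first by rewrite /a -mA hy2 m0r.
  by rewrite -mA /a -mA hy2 m0r m0r.
have Bx : forall n, mul (rpow mul b n) x = 0.
  elim=> [|n IH] /=; first by rewrite /b -mA hx2 m0r.
  by rewrite -mA /b -mA hx2 m0r m0r.
have ss : mul s s = a + b.
  by rewrite /s mDl !mDr hx2 hy2 add0r addr0.
have Ps : forall m, rpow mul s (2 * m).+1 = rpow mul a m + rpow mul b m.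
  elim=> [|m IH]; first by rewrite /= ss.
  have -> : (2 * m.+1).+1 = ((2 * m).+1).+2 by rewrite mulnS.
  change (mul (mul (rpow mul s (2 * m).+1) s) s = rpow mul a m.+1 + rpow mul b m.+1).
  rewrite -mA ss IH mDl !mDr.
  rewrite [mul (rpow mul a m) b]mA Ay m0l.
  by rewrite [mul (rpow mul b m) a]mA Bx m0l addr0 add0r.
have xA : forall n, mul x (rpow mul a n) = 0.
  elim=> [|n IH] /=; first by rewrite /a mA hx2 m0l.
  by rewrite mA IH m0l.
have xB : forall n, mul x (rpow mul b n) = mul (rpow mul a n) x.
  elim=> [|n IH] /=; first by rewrite /a /b mA.
  by rewrite mA IH -!mA /b /a mA.
have up : forall k j, rpow mul s k = 0 -> rpow mul s (j + k) = 0.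
  by move=> k; elim=> [|j IH] //= H; rewrite IH // m0l.
case=> k Hk; exists k.+1.
have H0 : rpow mul s (2 * k).+1 = 0.
  have -> : (2 * k).+1 = (k.+1 + k)%N by rewrite mul2n -addnn addSn.
  exact: up.
rewrite Ps in H0.
have := congr1 (fun t => mul (mul x t) y) H0.
by rewrite /= mDr xA add0r xB m0r m0l -mA.
Qed.
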